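(* Let $(R,\mathfrak m,k)$ be a Noetherian local ring of prime characteristic $p$ satisfying $$(0:\mathfrak m^p)_R:=\{x\in R \mid \mathfrak m^p x=0\}\not\subseteq \mathfrak m^p .$$ If $M$ is a finitely generated $R$-module such that $\operatorname{Tor}^R_j(M,{}^{\phi^r}\!R)=0$ for some integers $j\ge 1$ and $r\ge 1$, then $M$ is a projective (equivalently, free) $R$-module.
   Context: $\phi:R\to R$ denotes the Frobenius homomorphism $\phi(a)=a^p$. For $r\ge 1$, ${}^{\phi^r}\!R$ denotes the ring $R$ regarded as an $R$-module via $\phi^r$, i.e. $a\cdot b=a^{p^r}b$ for $a\in R$, $b\in {}^{\phi^r}\!R$. *)

(* Defs.v *)
From HB Require Import structures.
From mathcomp Require Import all_boot all_order all_algebra.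
Set Implicit Arguments. Unset Strict Implicit. Unset Printing Implicit Defensive.
Import Order.TTheory GRing.Theory.
Local Open Scope ring_scope.

Section CommAlg.
Variable R : comUnitRingType.

Definition is_ideal (I : R -> Prop) : Prop :=
  [/\ I 0, (forall x y, I x -> I y -> I (x + y)) & (forall a x, I x -> I (a * x))].

Definition fg_ideal (I : R -> Prop) : Prop :=
  exists s : seq R, forall x, I x <->
    exists c : seq R, size c = size s /\ x = \sum_(i < size s) c`_i * s`_i.

Definition noetherian : Prop := forall I, is_ideal I -> fg_ideal I.

(* local ring: the non-units form an ideal (the maximal ideal m) *)
Definition maxid (x : R) : Prop := x \isn't a GRing.unit.
Definition local_ring : Prop :=
  forall x y, maxid x -> maxid y -> maxid (x + y).

Definition maxid_pow (n : nat) (x : R) : Prop :=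
  exists s : seq (n.-tuple R),
    (forall t, t \in s -> forall i, maxid (tnth t i)) /\
    x = \sum_(t <- s) \prod_(i < n) tnth t i.

Definition ann_maxid_pow_not_sub (n : nat) : Prop :=
  exists x, (forall y, maxid_pow n y -> y * x = 0) /\ ~ maxid_pow n x.

Definition frobr_mx (p r : nat) (m n : nat) (A : 'M[R]_(m, n)) : 'M[R]_(m, n) :=
  map_mx (fun a => a ^+ (p ^ r)) A.

Variable M : lmodType R.

Definition fg_module : Prop :=
  exists n, exists f : {linear 'rV[R]_n -> M}, forall x, exists u, f u = x.

(* free module of finite rank (for f.g. modules over a local ring, this is
   equivalent to projective) *)
Definition free_module : Prop :=
  exists n, exists f : {linear 'rV[R]_n -> M}, bijective f.

(* A free resolution of M by finite free modules (row-vector convention):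
   ... -> R^(n 2) --d 1--> R^(n 1) --d 0--> R^(n 0) --aug--> M -> 0 *)
Record free_resolution := FreeRes {
  fr_rank : nat -> nat;
  fr_d : forall i, 'M[R]_(fr_rank i.+1, fr_rank i);
  fr_aug : {linear 'rV[R]_(fr_rank 0) -> M};
  fr_aug_surj : forall x, exists u, fr_aug u = x;
  fr_exact0 : forall u, fr_aug u = 0 <-> exists v, u = v *m fr_d 0;
  fr_exact : forall i (u : 'rV_(fr_rank i.+1)),
      u *m fr_d i = 0 <-> exists v, u = v *m fr_d i.+1
}.

(* Tor^R_{k+1}(M, ^{phi^r} R) = 0, computed from the free resolution F:
   F (x)_R ^{phi^r}R is the complex of the R^(n i) with differentials the
   matrices with entries raised to the power p^r; Tor_{k+1} is its homology
   at R^(n (k+1)). *)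
Definition tor_frob_vanish_res (F : free_resolution) (p r k : nat) : Prop :=
  forall u : 'rV[R]_(fr_rank F k.+1),
    u *m frobr_mx p r (fr_d F k) = 0 ->
    exists v : 'rV[R]_(fr_rank F k.+2), u = v *m frobr_mx p r (fr_d F k.+1).

(* Tor_j^R(M, ^{phi^r}R) = 0 for j >= 1 (Tor is independent of the chosen
   free resolution; we require vanishing for every finite free resolution). *)
Definition tor_frob_vanish (p r j : nat) : Prop :=
  forall F : free_resolution, tor_frob_vanish_res F p r j.-1.

End CommAlg.

(* Main.v *)
Require Import Defs.
From HB Require Import structures.
From mathcomp Require Import all_boot all_order all_algebra.
From Stdlib Require Import Classical IndefiniteDescription.
Set Implicit Arguments. Unset Strict Implicit. Unset Printing Implicit Defensive.
Import GRing.Theory.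
Local Open Scope ring_scope.


Definition submod (R : comUnitRingType) (V : lmodType R) (N : V -> Prop) :=
  [/\ N 0, (forall x y, N x -> N y -> N (x + y)) & (forall a x, N x -> N (a *: x))].

Definition spanP (R : comUnitRingType) (V : lmodType R) k (g : 'I_k -> V) (N : V -> Prop) :=
  forall x, N x <-> exists c : 'I_k -> R, x = \sum_i c i *: g i.

Lemma submod_sum (R : comUnitRingType) (V : lmodType R) (N : V -> Prop) k (g : 'I_k -> V) c :
  submod N -> (forall i, N (g i)) -> N (\sum_i c i *: g i).
Proof. case=> N0 ND NZ Hg; apply: (big_ind N) => // i _; exact: NZ. Qed.

Lemma sum_delta (R : comUnitRingType) (V : lmodType R) k (g : 'I_k -> V) i :
  \sum_l (l == i)%:R *: g l = g i.
Proof.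
rewrite (bigD1 i) //= eqxx scale1r big1 ?addr0 // => l /negPf ->; by rewrite scale0r.
Qed.

Lemma span_mem (R : comUnitRingType) (V : lmodType R) k (g : 'I_k -> V) N i :
  spanP g N -> N (g i).
Proof. move=> H; apply/H; exists (fun l => (l == i)%:R); by rewrite sum_delta. Qed.

Definition cat_fam (T : Type) k1 k2 (g : 'I_k1 -> T) (h : 'I_k2 -> T) (i : 'I_(k1 + k2)) :=
  match split i with inl a => g a | inr b => h b end.

Lemma split_l m n (i : 'I_m) : split (lshift n i) = inl i.
Proof. exact: (unsplitK (inl _ i)). Qed.
Lemma split_r m n (i : 'I_n) : split (rshift m i) = inr i.
Proof. exact: (unsplitK (inr _ i)). Qed.

Lemma sum_cat (R : comUnitRingType) (V : lmodType R) k1 k2 (g : 'I_k1 -> V) (h : 'I_k2 -> V)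
  (c : 'I_k1 -> R) (d : 'I_k2 -> R) :
  \sum_i c i *: g i + \sum_i d i *: h i = \sum_i cat_fam c d i *: cat_fam g h i.
Proof.
rewrite big_split_ord /=; congr (_ + _); apply: eq_bigr => i _;
  by rewrite /cat_fam ?split_l ?split_r.
Qed.

Lemma noeth_rV (R : comUnitRingType) (hn : noetherian R) n (N : 'rV[R]_n -> Prop) :
  submod N -> exists k (g : 'I_k -> 'rV_n), spanP g N.
Proof.
suff H : forall m (N : 'rV[R]_n -> Prop), submod N ->
    (forall u, N u -> forall i : 'I_n, (m <= i)%N -> u 0 i = 0) -> exists k (g : 'I_k -> 'rV[R]_n), spanP g N.
  move=> sN; apply: (H n N sN) => u _ i; by rewrite leqNgt ltn_ord.
elim=> [|m IH] {}N sN HN.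
  exists 0%N, (fun _ => 0) => x; split.
    move=> Nx; exists (fun _ => 0); rewrite big_ord0; apply/rowP => i.
    by rewrite mxE (HN x Nx i (leq0n _)).
  by case=> c ->; rewrite big_ord0; case: sN.
case: (ltnP m n) => [Hmn | Hnm]; last first.
  apply: IH => // u Nu i; rewrite leq_eqVlt => /orP [/eqP Eq|]; last exact: HN.
  by have := ltn_ord i; rewrite -Eq ltnNge Hnm.
case: (sN) => N0 ND NZ.
pose im := Ordinal Hmn.
pose I a := exists u, N u /\ u 0 im = a.
have Iid : is_ideal I.
  split.
  - by exists 0; rewrite mxE.
  - move=> _ _ [u [Nu <-]] [v [Nv <-]]; exists (u + v); by rewrite mxE; split => //; apply: ND.
  - move=> a _ [u [Nu <-]]; exists (a *: u); by rewrite mxE; split => //; apply: NZ.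
case: (hn I Iid) => s Hs.
have Hu : forall i : 'I_(size s), exists u, N u /\ u 0 im = s`_i.
  move=> i; apply/Hs; exists (mkseq (fun l => (l == i)%:R) (size s)); rewrite size_mkseq.
  split => //; rewrite (bigD1 i) //= nth_mkseq // eqxx mul1r big1 ?addr0 //.
  move=> l Hl; rewrite nth_mkseq // (_ : (l == i :> nat) = false) ?mul0r //; exact: (negPf Hl).
have [u Hu'] := functional_choice _ Hu.
pose N' v := N v /\ v 0 im = 0.
have sN' : submod N'.
  split.
  - by split => //; rewrite mxE.
  - by move=> x y [Nx Hx] [Ny Hy]; split; [apply: ND | rewrite mxE Hx Hy addr0].
  - by move=> a x [Nx Hx]; split; [apply: NZ | rewrite mxE Hx mulr0].
have HN' : forall v, N' v -> forall i : 'I_n, (m <= i)%N -> v 0 i = 0.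
  move=> v [Nv Hv] i; rewrite leq_eqVlt => /orP [/eqP Eq|]; last exact: HN.
  by have -> : i = im by apply: val_inj.
have [k [h Hh]] := IH N' sN' HN'.
exists (size s + k)%N, (cat_fam u h) => x; split.
  move=> Nx; have : I (x 0 im) by exists x.
  move/Hs => [c [Hc Ex]].
  pose y := x - \sum_(i < size s) c`_i *: u i.
  have N'y : N' y.
    split.
      apply: ND => //; rewrite -scaleN1r; apply: NZ; apply: submod_sum => [|i].
        exact: sN. exact: (proj1 (Hu' i)).
    have E : forall (a b : 'rV[R]_n) j, (a - b) 0 j = a 0 j - b 0 j by move=> *; rewrite !mxE.
    rewrite /y E summxE Ex.
    have Z : forall (a : R) (b : 'rV[R]_n) j, (a *: b) 0 j = a * b 0 j by move=> *; rewrite !mxE.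
    rewrite [X in _ - X](eq_bigr (fun l : 'I_(size s) => c`_l * s`_l)); last first.
      move=> l _. rewrite -(proj2 (Hu' l)). by rewrite mxE.
    by rewrite subrr.
  case/(Hh y): N'y => d Ed.
  have -> : x = \sum_(i < size s) c`_i *: u i + \sum_i d i *: h i by rewrite -Ed /y addrC subrK.
  rewrite sum_cat; by eexists.
case=> c ->; apply: submod_sum => // i; rewrite /cat_fam; case: split => a.
  exact: (proj1 (Hu' a)).
exact: (proj1 (span_mem a Hh)).
Qed.


Lemma min_gen (R : comUnitRingType) (V : lmodType R) (N : V -> Prop) k (g : 'I_k -> V) :
  spanP g N -> exists k' (g' : 'I_k' -> V), spanP g' N /\
    (forall c, \sum_i c i *: g' i = 0 -> forall i, maxid (c i)).
Proof.
elim: k g => [|k IH] g Hg.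
  by exists 0%N, g; split => // c _ [].
case: (classic (forall c, \sum_i c i *: g i = 0 -> forall i, maxid (c i))) => Hmin.
  by exists k.+1, g.
have [e [He [i0 Hi0]]] : exists e, \sum_i e i *: g i = 0 /\ exists i0, ~ maxid (e i0).
  apply: NNPP => Hn; apply: Hmin => c Hc i; apply: NNPP => Hci; apply: Hn.
  by exists c; split => //; exists i.
have ua : e i0 \is a GRing.unit by apply: NNPP => H; apply: Hi0; apply/negP.
pose g' (j : 'I_k) := g (lift i0 j).
have Hg0 : g i0 = - ((e i0)^-1 *: \sum_j e (lift i0 j) *: g' j).
  move: He; rewrite (bigD1_ord i0) //= => /eqP; rewrite addr_eq0 => /eqP He.
  by rewrite -[g i0]scale1r -(mulVr ua) -scalerA He scalerN.
apply: (IH g') => x; rewrite Hg; split.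
  case=> c ->; exists (fun j => c (lift i0 j) - c i0 * (e i0)^-1 * e (lift i0 j)).
  rewrite (bigD1_ord i0) //= Hg0.
  under [RHS]eq_bigr do rewrite scalerBl -!scalerA.
  rewrite sumrB scalerN !scaler_sumr addrC; congr (_ - _).
case=> c ->; exists (fun i => if unlift i0 i is Some j then c j else 0).
rewrite (bigD1_ord i0) //= unlift_none scale0r add0r.
by apply: eq_bigr => j _; rewrite liftK.
Qed.


Definition comb (R : comUnitRingType) (V : lmodType R) k (g : 'I_k -> V) (u : 'rV[R]_k) : V :=
  \sum_i u 0 i *: g i.

Lemma comb_semilinear (R : comUnitRingType) (V : lmodType R) k (g : 'I_k -> V) :
  semilinear (comb g).
Proof.
split=> [a u | u v]; rewrite /comb.
  rewrite scaler_sumr; apply: eq_bigr => i _; by rewrite mxE scalerA.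
rewrite -big_split /=; apply: eq_bigr => i _; by rewrite mxE scalerDl.
Qed.

HB.instance Definition _ (R : comUnitRingType) (V : lmodType R) k (g : 'I_k -> V) :=
  GRing.isSemilinear.Build R 'rV[R]_k V _ (comb g) (comb_semilinear g).

Lemma next_step (R : comUnitRingType) (hn : noetherian R) k (K : 'rV[R]_k -> Prop) :
  submod K -> exists k' (E : 'M[R]_(k', k)), (forall u, K u <-> exists v : 'rV_k', u = v *m E) /\
    (forall v : 'rV_k', v *m E = 0 -> forall i, maxid (v 0 i)).
Proof.
move=> sK; have [k1 [g1 H1]] := noeth_rV hn sK.
have [k' [h [Hh Hmin]]] := min_gen H1.
exists k', (\matrix_i h i).
have HE : forall v, v *m (\matrix_i h i) = \sum_i v 0 i *: h i.
  by move=> v; rewrite mulmx_sum_row; under eq_bigr do rewrite rowK.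
split.
  move=> u; rewrite Hh; split => [[c ->] | [v ->]].
    by exists (\row_i c i); rewrite HE; under [RHS]eq_bigr do rewrite mxE.
  by exists (fun i => v 0 i); rewrite HE.
by move=> v; rewrite HE; exact: Hmin.
Qed.

Lemma stage0 (R : comUnitRingType) (M : lmodType R) (hfg : fg_module M) :
  exists k (g : 'I_k -> M), (forall x, exists u : 'rV_k, comb g u = x) /\
    (forall u, comb g u = 0 -> forall i, maxid (u 0 i)).
Proof.
case: hfg => n [f Hf].
have H : spanP (fun i : 'I_n => f (delta_mx 0 i)) (fun _ => True).
  move=> x; split => // _; case: (Hf x) => u <-.
  exists (fun j => u 0 j); rewrite {1}(row_sum_delta u) linear_sum.
  by apply: eq_bigr => j _; rewrite linearZ.
have [k [g [Hg Hmin]]] := min_gen H.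
exists k, g; split.
  move=> x; case: (proj1 (Hg x) I) => c ->; exists (\row_i c i).
  by rewrite /comb; apply: eq_bigr => i _; rewrite mxE.
by move=> u Hu; apply: Hmin.
Qed.


Definition next_spec (R : comUnitRingType) a b (D : 'M[R]_(a, b)) (s : {k' : nat & 'M[R]_(k', a)}) :=
  (forall u : 'rV_a, u *m D = 0 <-> exists v : 'rV_(projT1 s), u = v *m projT2 s) /\
  (forall v : 'rV_(projT1 s), v *m projT2 s = 0 -> forall i, maxid (v 0 i)).

Lemma next_ex (R : comUnitRingType) (hn : noetherian R) a b (D : 'M[R]_(a, b)) :
  exists s, next_spec D s.
Proof.
have sK : submod (fun u : 'rV_a => u *m D = 0).
  split; first by rewrite mul0mx.
    by move=> x y Hx Hy; rewrite mulmxDl Hx Hy addr0.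
  by move=> c x Hx; rewrite -scalemxAl Hx scaler0.
have [k' [E [H1 H2]]] := next_step hn sK.
by exists (existT _ k' E); split.
Qed.

Definition nextD (R : comUnitRingType) (hn : noetherian R) a b (D : 'M[R]_(a, b)) :=
  proj1_sig (constructive_indefinite_description _ (next_ex hn D)).

Lemma nextD_spec (R : comUnitRingType) (hn : noetherian R) a b (D : 'M[R]_(a, b)) :
  next_spec D (nextD hn D).
Proof. exact: (proj2_sig (constructive_indefinite_description _ (next_ex hn D))). Qed.

Fixpoint resS (R : comUnitRingType) (hn : noetherian R) k1 k0 (E0 : 'M[R]_(k1, k0)) (i : nat) :
  {a : nat & {b : nat & 'M[R]_(a, b)}} :=
  match i with
  | 0 => existT _ k1 (existT _ k0 E0)
  | i'.+1 => let s := resS hn E0 i' in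
     existT _ (projT1 (nextD hn (projT2 (projT2 s))))
       (existT _ (projT1 s) (projT2 (nextD hn (projT2 (projT2 s)))))
  end.

Definition resRank (R : comUnitRingType) (hn : noetherian R) k1 k0 (E0 : 'M[R]_(k1, k0)) i :=
  projT1 (projT2 (resS hn E0 i)).

Definition resD (R : comUnitRingType) (hn : noetherian R) k1 k0 (E0 : 'M[R]_(k1, k0)) i :
  'M[R]_(resRank hn E0 i.+1, resRank hn E0 i) := projT2 (projT2 (resS hn E0 i)).

Lemma exists_res (R : comUnitRingType) (hn : noetherian R) (M : lmodType R) (hfg : fg_module M) :
  exists F : free_resolution M,
    (forall u, fr_aug F u = 0 -> forall i, maxid (u 0 i)) /\
    (forall i (v : 'rV_(fr_rank F i.+1)), v *m fr_d F i = 0 -> forall l, maxid (v 0 l)).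
Proof.
have [k0 [g [Hsurj Hmin0]]] := stage0 hfg.
pose aug0 : {linear 'rV[R]_k0 -> M} := comb g.
have sK0 : submod (fun u : 'rV_k0 => aug0 u = 0).
  split; first exact: raddf0.
    move=> x y Hx Hy; rewrite raddfD -(addr0 (0 : M)); congr (_ + _); [exact: Hx | exact: Hy].
  move=> c x Hx; rewrite linearZ -(scaler0 _ c); congr (_ *: _); exact: Hx.
have [k1 [E0 [HE0 HminE0]]] := next_step hn sK0.
pose aug : {linear 'rV[R]_(resRank hn E0 0) -> M} := aug0.
have ex : forall i (u : 'rV_(resRank hn E0 i.+1)),
    u *m resD hn E0 i = 0 <-> exists v, u = v *m resD hn E0 i.+1.
  move=> i u; exact: (proj1 (nextD_spec hn (resD hn E0 i)) u).
exists (@FreeRes R M (resRank hn E0) (resD hn E0) aug Hsurj HE0 ex).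
split => //=.
case=> [|i] v Hv l; first exact: HminE0 Hv l.
exact: (proj2 (nextD_spec hn (resD hn E0 i)) v Hv l).
Qed.


Lemma mp0 (R : comUnitRingType) n : @maxid_pow R n 0.
Proof. by exists [::]; split => //; rewrite big_nil. Qed.

Lemma mpD (R : comUnitRingType) n (x y : R) :
  @maxid_pow R n x -> @maxid_pow R n y -> @maxid_pow R n (x + y).
Proof.
case=> s1 [H1 ->] [s2 [H2 ->]]; exists (s1 ++ s2); split; last by rewrite big_cat.
by move=> t; rewrite mem_cat => /orP [/H1|/H2].
Qed.

Lemma mp_sum (R : comUnitRingType) n k (F : 'I_k -> R) :
  (forall i, @maxid_pow R n (F i)) -> @maxid_pow R n (\sum_i F i).
Proof. move=> H; apply: big_ind => //; [exact: mp0 | exact: mpD]. Qed.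

Lemma mp_term (R : comUnitRingType) p (v b : R) :
  (0 < p)%N -> maxid b -> @maxid_pow R p (v * b ^+ p).
Proof.
case: p => // p _ Hb.
exists [:: [tuple (if i == ord0 then v * b else b) | i < p.+1]]; split.
  move=> t; rewrite inE => /eqP -> i; rewrite tnth_mktuple; case: ifP => _ //.
  by rewrite /maxid unitrM negb_and Hb orbT.
rewrite big_seq1 big_ord_recl tnth_mktuple eqxx.
under eq_bigr do rewrite tnth_mktuple eq_sym (negPf (neq_lift _ _)).
by rewrite prodr_const card_ord exprS mulrA.
Qed.

Lemma frob_mp (R : comUnitRingType) p r (v a : R) :
  (0 < p)%N -> (0 < r)%N -> maxid a -> @maxid_pow R p (v * a ^+ (p ^ r)).
Proof.
move=> Hp; case: r => // r _ Ha; rewrite expnSr exprM; apply: mp_term => //.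
by rewrite /maxid unitrX_pos // expn_gt0 Hp.
Qed.

Lemma socle (R : comUnitRingType) p :
  ann_maxid_pow_not_sub R p -> exists s : R, s != 0 /\ forall a, maxid a -> a * s = 0.
Proof.
case=> x [Hx Hnx].
have x0 : x != 0 by apply/eqP => x0; apply: Hnx; rewrite x0; exact: mp0.
pose Q i := exists l : seq R, [/\ size l = i, (forall y, y \in l -> maxid y) &
   (\prod_(y <- l) y) * x != 0].
have nQp : ~ Q p.
  case=> l [Hs Hm Hne].
  pose tt : p.-tuple R := @Tuple p R l (introT eqP Hs).
  have : @maxid_pow R p (\prod_(y <- l) y).
    exists [:: tt]; split.
      by move=> t; rewrite inE => /eqP -> i; apply: Hm; exact: (mem_tnth i tt).
    by rewrite big_seq1; exact: (big_tuple 1 *%R tt predT id).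
  by move/Hx => H; rewrite H eqxx in Hne.
apply: NNPP => Hno; apply: nQp.
elim: p {Hx Hnx} => [|i [l [Hs Hm Hne]]].
  by exists [::]; split => //; rewrite big_nil mul1r.
apply: NNPP => HnQ; apply: Hno.
exists ((\prod_(y <- l) y) * x); split => // a Ha.
case: (eqVneq (a * ((\prod_(y <- l) y) * x)) 0) => // Hne'.
exfalso; apply: HnQ; exists (a :: l); split.
- by rewrite /= Hs.
- by move=> y; rewrite inE => /orP [/eqP -> | /Hm].
- by rewrite big_cons -mulrA.
Qed.


Theorem proposition1p1 (R : comUnitRingType) (p : nat)
  (hchar : p \in [pchar R]) (hnoeth : noetherian R) (hlocal : local_ring R)
  (hann : ann_maxid_pow_not_sub R p)
  (M : lmodType R) (hfg : fg_module M) (j r : nat) (hj : (1 <= j)%N) (hr : (1 <= r)%N)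
  (htor : tor_frob_vanish M p r j) :
  free_module M.
Proof.
have Hp : (0 < p)%N by apply: prime_gt0; exact: pcharf_prime hchar.
have [F [HminA HminD]] := exists_res hnoeth hfg.
have Hent : forall i a b, maxid (fr_d F i a b).
  case=> [|i] a b.
    suff : maxid (row a (fr_d F 0) 0 b) by rewrite mxE.
    apply: HminA.
    apply: (proj2 (@fr_exact0 _ _ F _)); by exists (delta_mx 0 a); rewrite rowE.
  suff : maxid (row a (fr_d F i.+1) 0 b) by rewrite mxE.
  apply: HminD.
  by apply: (proj2 (@fr_exact _ _ F i _)); exists (delta_mx 0 a); rewrite rowE.
have [s [s0 Hs]] := socle hann.
case: j hj htor => // j _ htor.
have Hj0 : fr_rank F j.+1 = 0%N.
  apply/eqP; rewrite -leqn0 leqNgt; apply/negP => Hpos.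
  pose e := Ordinal Hpos.
  case: hann => x [Hx Hnx].
  have := htor F (x *: delta_mx 0 e); case.
    apply/rowP => c; rewrite -scalemxAl -rowE !mxE mulrC.
    by rewrite -[_ ^+ _]mul1r; apply: Hx; apply: frob_mp.
  move=> v Hv; apply: Hnx.
  have : (x *: delta_mx 0 e : 'rV_(fr_rank F j.+1)) 0 e = x by rewrite !mxE eqxx mulr1.
  rewrite Hv mxE => <-; apply: mp_sum => l; rewrite mxE; exact: frob_mp.
have Hdown : forall i, fr_rank F i.+2 = 0%N -> fr_rank F i.+1 = 0%N.
  move=> i H0; apply/eqP; rewrite -leqn0 leqNgt; apply/negP => Hpos.
  pose e := Ordinal Hpos.
  have := proj1 (@fr_exact _ _ F i (s *: delta_mx 0 e)); case.
    apply/rowP => c; rewrite -scalemxAl -rowE !mxE mulrC; exact: Hs.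
  move=> v Hv; move/eqP: s0; apply.
  have : (s *: delta_mx 0 e : 'rV_(fr_rank F i.+1)) 0 e = s by rewrite !mxE eqxx mulr1.
  rewrite Hv mxE => <-; apply: big1 => l _.
  exfalso; have := ltn_ord l; move: (nat_of_ord l) => m; by rewrite H0.
have H1 : fr_rank F 1 = 0%N.
  move: Hj0; elim: j {htor} => // n IH H; apply: IH; exact: Hdown.
have Hinj : forall u, fr_aug F u = 0 -> u = 0.
  move=> u /(proj1 (@fr_exact0 _ _ F u)) [v ->]; apply/rowP => c; rewrite !mxE; apply: big1 => l _.
  exfalso; have := ltn_ord l; move: (nat_of_ord l) => m; by rewrite H1.
have [h Hh] := functional_choice _ (fr_aug_surj F).
exists (fr_rank F 0), (fr_aug F), h => // u.
apply/eqP; rewrite -subr_eq0; apply/eqP; apply: Hinj.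
by rewrite raddfB -[RHS](subrr (fr_aug F u)); congr (_ - _); exact: Hh.
Qed.
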